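(* Let $\mathbb{F}$ be a commutative field, $n\ge 2$ an integer, and $S=\mathbf{PGL}_n(\mathbb{F})$ acting naturally on the projective space $\mathbf{PG}(n-1,\mathbb{F})$. Let $x$ be a point and $\Pi$ a hyperplane of $\mathbf{PG}(n-1,\mathbb{F})$ (any choice), and put $L=S_x$ (the stabilizer of $x$) and $L'=S_\Pi$ (the stabilizer of $\Pi$). Then $(S\wr \mathrm{S}_2,\ L\wr \mathrm{S}_2,\ L'\wr \mathrm{S}_2)$ is an EC-triple.
   Context: For a group $S$ and a subgroup $P$ of the symmetric group on a finite nonempty set $\Omega$, the wreath product $S\wr P$ consists of pairs $(g,p)$ with $g=(g_\omega)_{\omega\in\Omega}\in S^\Omega$ and $p\in P$, with multiplication $(g,p)(g',p')=(g\,p(g'),pp')$, where $p(g')=(g'_{p^{-1}(\omega)})_{\omega\in\Omega}$. For $L\le S$, $L\wr P$ denotes the subgroup $\{(g,p): g\in L^\Omega, p\in P\}$. Here $\mathrm{S}_2$ is the symmetric group on $\{1,2\}$. A triple $(G,H,H')$ with $H,H'\le G$ is an EC-triple if every element of $H$ is conjugate in $G$ to some element of $H'$ and every element of $H'$ is conjugate in $G$ to some element of $H$. *)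

(* Defs.v *)
(* PGL_n(F) for a possibly infinite field F is modelled
   concretely: elements of PGL_n(F) are invertible n x n matrices taken up to
   nonzero scalars; S wr S_2 is modelled as triples (A1, A2, p) with p : bool
   (true = the transposition of S_2), and the wreath-product law of the paper. *)
From mathcomp Require Import all_boot all_order all_algebra all_fingroup.
Set Implicit Arguments. Unset Strict Implicit. Unset Printing Implicit Defensive.
Import GRing.Theory.
Local Open Scope ring_scope.

Section Wreath.
Variables (F : fieldType) (n : nat).

Definition wr := ('M[F]_n * 'M[F]_n * bool)%type.

Definition in_wr (w : wr) : Prop :=
  w.1.1 \in unitmx /\ w.1.2 \in unitmx.

(* (g,p)(g',p') = (g p(g'), pp'), p(g')_w = g'_{p^-1 w}. *)
Definition wr_mul (w w' : wr) : wr :=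
  if w.2 then (w.1.1 *m w'.1.2, w.1.2 *m w'.1.1, ~~ w'.2)
  else (w.1.1 *m w'.1.1, w.1.2 *m w'.1.2, w'.2).

Definition wr_inv (w : wr) : wr :=
  if w.2 then (invmx w.1.2, invmx w.1.1, true)
  else (invmx w.1.1, invmx w.1.2, false).

Definition wr_proj_eq (w w' : wr) : Prop :=
  w.2 = w'.2 /\
  exists a1 a2 : F, a1 != 0 /\ a2 != 0 /\
    w'.1.1 = a1 *: w.1.1 /\ w'.1.2 = a2 *: w.1.2.

Definition wr_conj (w w' : wr) : Prop :=
  exists v : wr, in_wr v /\ wr_proj_eq (wr_mul (wr_inv v) (wr_mul w v)) w'.

(* L wr S_2 for L given by a (scalar-invariant) predicate on GL_n(F). *)
Definition wr_sub (L : 'M[F]_n -> Prop) (w : wr) : Prop :=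
  in_wr w /\ L w.1.1 /\ L w.1.2.

Definition EC_triple_wr (H H' : wr -> Prop) : Prop :=
  (forall h, H h -> exists h', H' h' /\ wr_conj h h') /\
  (forall h', H' h' -> exists h, H h /\ wr_conj h' h).

(* Natural action of GL_n(F) on row vectors (v |-> v *m g), inducing the
   action of PGL_n(F) on PG(n-1,F). A point is the row space of a nonzero row
   vector x; a hyperplane is the row space of a matrix of rank n-1. *)
Definition stab_point (x : 'rV[F]_n) (g : 'M[F]_n) : Prop :=
  (x *m g == x)%MS.
Definition stab_subspace (P : 'M[F]_n) (g : 'M[F]_n) : Prop :=
  (P *m g == P)%MS.

End Wreath.

(* Main.v *)
Require Import Defs.
From mathcomp Require Import all_boot all_order all_algebra all_fingroup.
Set Implicit Arguments. Unset Strict Implicit. Unset Printing Implicit Defensive.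
Import GRing.Theory.
Local Open Scope ring_scope.

Lemma eig_tr (F : fieldType) n (g : 'M[F]_n) a : eigenvalue g a = eigenvalue g^T a.
Proof.
rewrite /eigenvalue /eigenspace -!mxrank_eq0 !mxrank_ker.
by rewrite -mxrank_tr linearB /= tr_scalar_mx.
Qed.

Lemma exP (F : fieldType) m1 m2 n (A : 'M[F]_(m1, n)) (B : 'M[F]_(m2, n)) :
  \rank A = \rank B -> exists2 P : 'M[F]_n, P \in unitmx & (A *m P == B)%MS.
Proof.
move=> hr; exists (invmx (row_ebase A) *m row_ebase B).
  by rewrite unitmx_mul unitmx_inv !row_ebase_unit.
have eA := eq_row_base A; have eB := eq_row_base B.
rewrite /row_base in eA eB.
rewrite -hr in eB.
apply/eqmxP; apply: eqmx_trans (eqmxMr _ (eqmx_sym eA)) _.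
rewrite -!mulmxA (mulmxA (row_ebase A)) mulmxV ?row_ebase_unit // mul1mx.
exact: eB.
Qed.

Lemma stab_full (F : fieldType) m n (A : 'M[F]_(m, n)) g :
  g \in unitmx -> (A *m g <= A)%MS -> (A *m g == A)%MS.
Proof.
move=> gu s; apply/andP; split => //.
by rewrite -(mxrank_leqif_sup s) mxrankMfree // row_free_unit.
Qed.

Lemma stab_conj (F : fieldType) m1 m2 n (A : 'M[F]_(m1, n)) (B : 'M[F]_(m2, n)) g :
  \rank A = \rank B -> (A *m g == A)%MS ->
  exists2 P : 'M[F]_n, P \in unitmx & (B *m (invmx P *m g *m P) == B)%MS.
Proof.
move=> /exP [P Pu /eqmxP AP] /eqmxP Ag; exists P => //.
have BA : (B *m invmx P :=: A)%MS.
  apply: eqmx_trans (eqmxMr _ (eqmx_sym AP)) _.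
  by rewrite -mulmxA mulmxV // mulmx1.
apply/eqmxP; rewrite !mulmxA.
apply: eqmx_trans (eqmxMr _ (eqmxMr _ BA)) _.
by apply: eqmx_trans (eqmxMr _ Ag) _.
Qed.

Lemma stabM (F : fieldType) m n (A : 'M[F]_(m, n)) g h :
  (A *m g == A)%MS -> (A *m h == A)%MS -> (A *m (g *m h) == A)%MS.
Proof.
move=> /eqmxP Ag /eqmxP Ah; apply/eqmxP; rewrite mulmxA.
by apply: eqmx_trans (eqmxMr _ Ag) _.
Qed.

Lemma pt_eig (F : fieldType) n (x : 'rV[F]_n) g :
  (x *m g == x)%MS -> x != 0 -> exists a, eigenvalue g a.
Proof.
move=> /andP [/sub_rVP [a ha] _] xn; exists a; apply/eigenvalueP; by exists x.
Qed.

Lemma eig_pt (F : fieldType) n (g : 'M[F]_n) a : g \in unitmx -> eigenvalue g a ->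
  exists2 u : 'rV[F]_n, u != 0 & (u *m g == u)%MS.
Proof.
move=> gu /eigenvalueP [u hu un]; exists u => //; apply: stab_full => //.
by rewrite hu scalemx_sub.
Qed.

Lemma hyp_eig (F : fieldType) n (Pi : 'M[F]_n) g : (1 <= n)%N ->
  \rank Pi = n.-1 -> (Pi *m g == Pi)%MS -> exists a, eigenvalue g^T a.
Proof.
move=> n1 hr /andP [/submxP [D hD] _].
set K := kermx Pi^T.
have rK : \rank K = 1%N.
  by rewrite mxrank_ker mxrank_tr hr -{1}(prednK n1) subSnn.
have : K != 0 by rewrite -mxrank_eq0 rK.
case/rowV0Pn => y yK yn.
have yK' : (K <= y)%MS.
  by rewrite -(mxrank_leqif_sup yK) rK rank_rV yn.
have : (y *m g^T <= y)%MS.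
  apply: submx_trans yK'; apply/sub_kermxP.
  move/sub_kermxP: yK => yK.
  by rewrite -mulmxA -trmx_mul hD trmx_mul mulmxA yK mul0mx.
case/sub_rVP => a ha; exists a; apply/eigenvalueP; by exists y.
Qed.

Lemma eig_hyp (F : fieldType) n (g : 'M[F]_n) a : g \in unitmx -> eigenvalue g^T a ->
  exists2 K : 'M[F]_n, \rank K = n.-1 & (K *m g == K)%MS.
Proof.
move=> gu /eigenvalueP [w hw wn]; exists (kermx w^T).
  by rewrite mxrank_ker mxrank_tr rank_rV wn subn1.
apply: stab_full => //; apply/sub_kermxP.
by rewrite -mulmxA -[g]trmxK -trmx_mul hw linearZ /= -scalemxAr mulmx_ker scaler0.
Qed.

Lemma ec_gen (F : fieldType) n (L L' : 'M[F]_n -> Prop) :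
  (forall g h, L g -> L h -> L (g *m h)) -> L' 1%:M ->
  (forall g, g \in unitmx -> L g -> exists2 P : 'M[F]_n, P \in unitmx & L' (invmx P *m g *m P)) ->
  forall h, wr_sub L h -> exists h', wr_sub L' h' /\ wr_conj h h'.
Proof.
move=> LM L'1 Lc [[g1 g2] p] [[/= u1 u2] [/= L1 L2]].
case: p.
  have u12 : g1 *m g2 \in unitmx by rewrite unitmx_mul u1 u2.
  have [P Pu HP] := Lc _ u12 (LM _ _ L1 L2).
  have u2P : g2 *m P \in unitmx by rewrite unitmx_mul u2 Pu.
  exists (invmx P *m (g1 *m g2) *m P, 1%:M, true); split.
    split; first by split; rewrite /= ?unitmx1 // !unitmx_mul unitmx_inv Pu u1 u2.
    by split.
  exists (P, g2 *m P, false); split; first by split.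
  rewrite /wr_mul /wr_inv /=; split => //; exists 1, 1; do 2 (split; first exact: oner_neq0).
  by rewrite !scale1r mulVmx // !mulmxA.
have [P1 P1u H1] := Lc _ u1 L1.
have [P2 P2u H2] := Lc _ u2 L2.
exists (invmx P1 *m g1 *m P1, invmx P2 *m g2 *m P2, false); split.
  split; first by split; rewrite /= !unitmx_mul unitmx_inv ?P1u ?P2u ?u1 ?u2.
  by split.
exists (P1, P2, false); split; first by split.
rewrite /wr_mul /wr_inv /=; split => //; exists 1, 1; do 2 (split; first exact: oner_neq0).
by rewrite !scale1r !mulmxA.
Qed.

Theorem mainTheorem2 (F : fieldType) (n : nat) (hn : (2 <= n)%N)
  (x : 'rV[F]_n) (Pi : 'M[F]_n)
  (hx : x != 0) (hPi : \rank Pi = n.-1) :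
  EC_triple_wr
    (wr_sub (stab_point x))
    (wr_sub (stab_subspace Pi)).
Proof.
have n1 : (1 <= n)%N by apply: leq_trans hn.
split; apply: ec_gen; rewrite /stab_point /stab_subspace.
- exact: stabM.
- by rewrite mulmx1 submx_refl.
- move=> g gu Hg; have [a ha] := pt_eig Hg hx.
  rewrite eig_tr in ha; have [K rK HK] := eig_hyp gu ha.
  by apply: stab_conj HK; rewrite rK hPi.
- exact: stabM.
- by rewrite mulmx1 submx_refl.
- move=> g gu Hg; have [a ha] := hyp_eig n1 hPi Hg.
  rewrite -eig_tr in ha; have [u un Hu] := eig_pt gu ha.
  by apply: stab_conj Hu; rewrite !rank_rV un hx.
Qed.
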